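(* In the network model described in the context, let $\pi$ be an admissible cyclic policy with maximum inter-scheduling times $k^{\pi}_e$, and suppose the slice widths satisfy $w_{i,e}\ge\lambda_i k^{\pi}_e$ for all $e\in\mathcal{T}^{(i)}$. Then the delay deficit of any packet belonging to flow $f_i$ is never larger than zero when it arrives at a new link of its route.
   Context: Network model: directed graph $G=(V,E)$, slotted time, link capacities $c_e$, interference given by a conflict graph on links with feasible activation sets $\mathcal{M}$. Flow $f_i$ has fixed route $\mathcal{T}^{(i)}$ and deterministic fluid arrival rate $\lambda_i>0$ per slot at its source. Link $e\in\mathcal{T}^{(i)}$ reserves a slice $w_{i,e}$ for $f_i$ with its own first-come-first-served queue (initially empty). An admissible policy activates $\mu^\pi(t)\in\mathcal{M}$ in each slot and is work-conserving (an activated link serves $\min\{Q_{i,e}(t),w_{i,e}\}$ from each slice queue; served units proceed to the next link of the route). A cyclic policy satisfies $\mu^\pi(t)=\mu^\pi(t+K^\pi)$ for all $t\ge0$. The maximum inter-scheduling time $k_e^\pi$ of link $e$ is the largest number of slots between two consecutive activations of $e$ (cyclically over the period), so that $e$ is activated at least once in every window of $k_e^\pi$ consecutive slots. For a packet $l$ of $f_i$ arriving at its source at time $t_0^l$, its age at time $t$ is $a^l(t)=t-t_0^l$, and its delay deficit is $\delta^l(t)=a^l(t)-\sum_{e\in\tilde{T}^{(l)}}k_e^\pi$, where $\tilde{T}^{(l)}$ is the set of links of its route at which it has already been served (so $\delta^l=0$ on arrival at the source, it increases by one each slot, and decreases by $k_e^\pi$ when the packet is served at link $e$). *)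

(* Defs.v *)
From mathcomp Require Import all_boot all_order all_algebra.
Set Implicit Arguments. Unset Strict Implicit. Unset Printing Implicit Defensive.
Import Order.TTheory GRing.Theory Num.Theory.
Local Open Scope ring_scope.

Section Model.
Variables (R : realFieldType) (V E : finType).

Definition is_route (src dst : E -> V) (r : seq E) : bool :=
  uniq r && sorted (fun e e' => dst e == src e') r.

Definition feasible (conflict : rel E) (S : {set E}) : bool :=
  [forall e, forall e', ((e \in S) && (e' \in S)) ==> ~~ conflict e e'].

Definition next_gap (mu : nat -> {set E}) (K : nat) (e : E) (s : nat) : nat :=
  (find (fun d => e \in mu (s + d.+1)) (iota 0 K)).+1.

Definition kmax (mu : nat -> {set E}) (K : nat) (e : E) : nat :=
  \max_(s < K | e \in mu s) next_gap mu K e s.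

Definition hop_active (r : seq E) (mu : nat -> {set E}) (j t : nat) : bool :=
  if onth r j is Some e then e \in mu t else false.

Definition hop_width (r : seq E) (w : E -> R) (j : nat) : R :=
  if onth r j is Some e then w e else 0.

(* Work-conserving fluid dynamics of one flow (arrival rate lam per slot,
   route r, slice widths w) under activation sequence mu.
   cum_dep t j = total amount served at hop j during slots 0..t-1.
   Amount arrived at hop j during slots 0..t: lam*(t+1) at the source,
   cum_dep t (j-1) downstream (served at the previous hop in slot t-1 or
   earlier). *)
Fixpoint cum_dep (lam : R) (r : seq E) (w : E -> R) (mu : nat -> {set E})
    (t : nat) : nat -> R :=
  match t with
  | 0 => fun _ => 0
  | t'.+1 => fun j =>
      let D := cum_dep lam r w mu t' in
      let arr := if j is j'.+1 then D j' else lam * (t'.+1)%:R in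
      D j + (if hop_active r mu j t' then Num.min (arr - D j) (hop_width r w j)
             else 0)
  end.

(* Fluid packets are labeled by their cumulative position x > 0 in the
   arrival stream of the flow (FCFS everywhere).  Packet x arrives at the
   source in slot t0: *)
Definition arrival_slot (lam : R) (x : R) (t0 : nat) : bool :=
  (lam * t0%:R < x) && (x <= lam * t0.+1%:R).

(* Packet x is served at hop j during slot s (it then arrives at hop j+1
   at time s+1). *)
Definition served_at (lam : R) (r : seq E) (w : E -> R) (mu : nat -> {set E})
    (j s : nat) (x : R) : bool :=
  (cum_dep lam r w mu s j < x) && (x <= cum_dep lam r w mu s.+1 j).

End Model.

(* Delay deficit at time t of a packet that arrived at its source at t0 and
   has already been served at links with inter-scheduling times ks. *)
Definition delay_deficit (t t0 : nat) (ks : seq nat) : int :=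
  (t%:Z - t0%:Z - (sumn ks)%:Z)%R.

(* Main.v *)
Require Import Defs.
From mathcomp Require Import all_boot all_order all_algebra.
From mathcomp Require Import zify ring lra.
Set Implicit Arguments. Unset Strict Implicit.
Import Order.TTheory GRing.Theory Num.Theory.
Local Open Scope ring_scope.

Lemma mu_periodic (E : finType) (mu : nat -> {set E}) (K : nat) :
  (forall t, mu (t + K)%N = mu t) -> forall t q, mu (t + q * K)%N = mu t.
Proof.
move=> hp t; elim=> [|q IH]; first by rewrite mul0n addn0.
by rewrite mulSn addnCA addnC hp.
Qed.

Lemma mu_mod (E : finType) (mu : nat -> {set E}) (K : nat) :
  (forall t, mu (t + K)%N = mu t) -> forall t, mu t = mu (t %% K)%N.
Proof.
move=> hp t; rewrite {1}(divn_eq t K) addnC; exact: mu_periodic.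
Qed.

Lemma next_active (E : finType) (mu : nat -> {set E}) (K : nat) (e : E) (a : nat) :
  (0 < K)%N -> (forall t, mu (t + K)%N = mu t) -> e \in mu a ->
  exists g, [/\ (0 < g)%N, (g <= kmax mu K e)%N & e \in mu (a + g)%N].
Proof.
move=> K0 hp ea.
have sK : (a %% K < K)%N by rewrite ltn_pmod.
have es : e \in mu (a %% K)%N by rewrite -(mu_mod hp).
exists (next_gap mu K e (a %% K)); split => //.
- rewrite /kmax.
  exact: (@leq_bigmax_cond _ (fun s : 'I_K => e \in mu s) (fun s : 'I_K => next_gap mu K e s) (Ordinal sK)).
- set P := (fun d => e \in mu (a %% K + d.+1)%N).
  have hasP : has P (iota 0 K).
    apply/hasP; exists K.-1; first by rewrite mem_iota /=; lia.
    by rewrite /P prednK // hp.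
  have := nth_find 0 hasP; rewrite has_find size_iota in hasP.
  rewrite nth_iota // add0n /P.
  rewrite /next_gap -/P (mu_mod hp (a + _)) (mu_mod hp (a %% K + _)).
  by rewrite modnDml.
Qed.

Lemma window (E : finType) (mu : nat -> {set E}) (K : nat) (e : E) (t0 : nat) :
  (0 < K)%N -> (forall t, mu (t + K)%N = mu t) -> e \in mu t0 ->
  (0 < kmax mu K e)%N /\
  forall n, (kmax mu K e <= n.+1)%N ->
    exists a, [/\ (n.+1 - kmax mu K e <= a)%N, (a <= n)%N & e \in mu a].
Proof.
move=> K0 hp et0; set k := kmax mu K e.
have kpos : (0 < k)%N.
  by have [g [g0 gk _]] := next_active K0 hp et0; apply: leq_trans gk.
split=> //.
have first : exists a, (a < k)%N && (e \in mu a).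
  have exP : exists t, e \in mu t by exists t0.
  case: (ex_minnP exP) => m em minm.
  have mK : (m < K)%N.
    apply: leq_ltn_trans (ltn_pmod t0 K0); apply: minm.
    by rewrite -(mu_mod hp).
  have exQ : exists a, (a < m + K)%N && (e \in mu a).
    by exists m; rewrite em andbT; lia.
  have ubQ : forall a, (a < m + K)%N && (e \in mu a) -> (a <= m + K)%N.
    by move=> a /andP[h _]; lia.
  case: (ex_maxnP exQ ubQ) => a /andP[aK ea] maxa.
  have ma : (m <= a)%N by apply: maxa; rewrite em andbT; lia.
  have aK' : (a < K)%N.
    rewrite ltnNge; apply/negP => Ka.
    have : (m <= a - K)%N.
      by apply: minm; rewrite -hp subnK.
    lia.
  have [g [g0 gk eg]] := next_active K0 hp ea.
  have : ~~ ((a + g < m + K)%N && (e \in mu (a + g)%N)).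
    by apply/negP => /maxa; lia.
  rewrite eg andbT -leqNgt => h.
  by exists m; rewrite em andbT; lia.
elim=> [|n IH] hk.
  have [a /andP[ak ea]] := first.
  by exists a; split => //; lia.
case: (leqP k n.+1) => hkn.
  have [a [h1 h2 ea]] := IH hkn.
  case: (leqP (n.+2 - k) a) => h3.
    by exists a; split => //; lia.
  have [g [g0 gk eg]] := next_active K0 hp ea.
  by exists (a + g)%N; split => //; lia.
have [a /andP[ak ea]] := first.
by exists a; split => //; lia.
Qed.

Lemma queue_mono (R : realFieldType) (wj : R) (act : nat -> bool) (A D : nat -> R) :
  0 <= wj -> (forall t, 0 <= A t) -> (forall t, A t <= A t.+1) -> D 0%N = 0 ->
  (forall t, D t.+1 = D t + (if act t then Num.min (A t - D t) wj else 0)) ->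
  forall t, [/\ 0 <= D t, D t <= A t & D t <= D t.+1].
Proof.
move=> w0 A0 Am D0 Dr.
have H : forall t, 0 <= D t /\ D t <= A t.
  elim=> [|t [IH1 IH2]]; first by rewrite D0 A0.
  have := Am t; rewrite Dr; case: (act t); last by rewrite addr0; split=> //; lra.
  rewrite minEle; case: ifP => h; split; lra.
move=> t; have [h1 h2] := H t; split => //.
rewrite Dr; case: (act t); last by rewrite addr0.
rewrite minEle; case: ifP => h; lra.
Qed.

Lemma queue_bound (R : realFieldType) (lam wj : R) (S k : nat) (act : nat -> bool)
  (A D : nat -> R) :
  0 <= lam -> lam * k%:R <= wj -> (0 < k)%N ->
  (forall n, (k <= n.+1)%N -> exists a, [/\ (n.+1 - k <= a)%N, (a <= n)%N & act a]) ->
  (forall t, 0 <= A t) -> (forall t, A t <= A t.+1) ->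
  (forall a, lam * (a.+1%:R - S%:R) <= A a) ->
  D 0%N = 0 ->
  (forall t, D t.+1 = D t + (if act t then Num.min (A t - D t) wj else 0)) ->
  forall n, lam * (n.+1%:R - (S + k)%:R) <= D n.
Proof.
move=> l0 lw k0 win A0 Am AS D0 Dr.
have w0 : 0 <= wj by apply: le_trans lw; apply: mulr_ge0 => //; exact: ler0n.
have DM := queue_mono w0 A0 Am D0 Dr.
have Dmono : forall t d, D t <= D (t + d)%N.
  move=> t; elim=> [|d IH]; first by rewrite addn0.
  by apply: le_trans IH _; rewrite addnS; case: (DM (t + d)%N).
elim/ltn_ind => n IH.
case: (leqP k n) => hkn; last first.
  have h : (n.+1%:R <= (S + k)%:R :> R) by rewrite ler_nat; lia.
  case: (DM n) => Dn _ _.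
  apply: le_trans Dn; rewrite mulr_ge0_le0 //; lra.
case: n IH hkn => [|m] IH hkn; first by lia.
have [a [h1 h2 ea]] := win m hkn.
have key : lam * (a.+1%:R - S%:R) <= D a.+1.
  rewrite Dr ea minEle; case: ifP => h.
    by have := AS a; lra.
  have ltam : (a < m.+1)%N by lia.
  have := IH a ltam.
  rewrite natrD => IHa.
  have : lam * (a.+1%:R - S%:R) = lam * (a.+1%:R - (S%:R + k%:R)) + lam * k%:R.
    by ring.
  lra.
have hD : D a.+1 <= D m.+1.
  have e : (a.+1 + (m - a) = m.+1)%N by lia.
  by have := Dmono a.+1 (m - a)%N; rewrite e.
have h : (m.+2%:R <= (a.+1 + k)%:R :> R) by rewrite ler_nat; lia.
rewrite natrD in h; rewrite natrD.
apply: le_trans hD; apply: le_trans key.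
apply: ler_wpM2l => //; lra.
Qed.

Lemma onth_some (T : Type) (x0 : T) (s : seq T) (n : nat) :
  (n < size s)%N -> onth s n = Some (nth x0 s n).
Proof. by move=> h; rewrite onthE (nth_map x0). Qed.

Unset Implicit Arguments.
Theorem lemma2 (R : realFieldType) (V E I : finType)
  (src dst : E -> V) (conflict : rel E)
  (route : I -> seq E) (lam : I -> R) (w : I -> E -> R)
  (mu : nat -> {set E}) (K : nat) :
  (forall i, is_route src dst (route i)) ->
  (forall i, 0 < lam i) ->
  (forall t, feasible conflict (mu t)) ->
  (0 < K)%N -> (forall t, mu (t + K)%N = mu t) ->
  (forall i e, e \in route i -> lam i * (kmax mu K e)%:R <= w i e) ->
  forall (i : I) (j : nat) (x : R) (t0 s : nat),
    (j.+1 < size (route i))%N ->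
    arrival_slot (lam i) x t0 ->
    served_at (lam i) (route i) (w i) mu j s x ->
    delay_deficit s.+1 t0 [seq kmax mu K e | e <- take j.+1 (route i)] <= 0.
Proof.
move=> _ lpos _ K0 hp hw i j x t0 s hj /andP[ax1 ax2] /andP[sx1 sx2].
set r := route i in hj sx1 sx2 *.
have l0 : 0 <= lam i by apply: ltW.
have [e0 _] : exists e0 : E, true.
  by move: hj; rewrite /r; case: (route i) => [|e ?] //; exists e.
set D := fun l t => cum_dep (lam i) r (w i) mu t l.
set Arr := fun l t => if l is l'.+1 then D l' t else lam i * t.+1%:R.
have Dr : forall l t, D l t.+1 = D l t +
   (if hop_active r mu l t then Num.min (Arr l t - D l t) (hop_width r (w i) l) else 0).
  by move=> [|l] t.
have D0 : forall l, D l 0%N = 0 by [].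
pose el := fun l => nth e0 r l.
have actE : forall l t, (l < size r)%N -> hop_active r mu l t = (el l \in mu t).
  by move=> l t hl; rewrite /hop_active (onth_some e0 hl).
have widE : forall l, (l < size r)%N -> hop_width r (w i) l = w i (el l).
  by move=> l hl; rewrite /hop_width (onth_some e0 hl).
have elin : forall l, (l < size r)%N -> el l \in r by move=> l hl; exact: mem_nth.
have wk : forall l, (l < size r)%N -> lam i * (kmax mu K (el l))%:R <= hop_width r (w i) l.
  by move=> l hl; rewrite widE //; apply: hw; exact: elin.
have w0 : forall l, (l < size r)%N -> 0 <= hop_width r (w i) l.
  by move=> l hl; apply: le_trans (wk l hl); apply: mulr_ge0 => //; exact: ler0n.
have mono : forall l, (l < size r)%N -> forall t, [/\ 0 <= D l t, D l t <= Arr l t & D l t <= D l t.+1].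
  elim=> [|l IH] hl.
    apply: (queue_mono (w0 0%N hl)) => //.
    - by move=> t; apply: mulr_ge0 => //; exact: ler0n.
    - by move=> t; apply: ler_wpM2l => //; rewrite ler_nat.
  apply: (queue_mono (w0 _ hl)) => //.
  - by move=> t; have [] := IH (ltnW hl) t.
  - by move=> t; have [] := IH (ltnW hl) t.
have act : forall l t, (l < size r)%N -> 0 < D l t -> exists a, el l \in mu a.
  move=> l t hl; elim: t => [|t IH]; first by rewrite D0 ltxx.
  rewrite Dr actE //; case: ifP => ha; first by exists t.
  by rewrite addr0.
have xpos : 0 < x.
  apply: le_lt_trans ax1; apply: mulr_ge0 => //; exact: ler0n.
have pos : forall d, (d <= j)%N -> 0 < D (j - d)%N s.+1.
  elim=> [|d IH] hd; first by rewrite subn0; exact: lt_le_trans sx2.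
  have e : (j - d = (j - d.+1).+1)%N by lia.
  have := IH (ltnW hd); rewrite e => h.
  have [_ h2 _] := mono (j - d.+1).+1 ltac:(lia) s.+1.
  exact: lt_le_trans h2.
have actl : forall l, (l <= j)%N -> exists a, el l \in mu a.
  move=> l hl; apply: (act l s.+1); first by lia.
  have := pos (j - l)%N ltac:(lia).
  by have -> : (j - (j - l) = l)%N by lia.
set S := fun l => sumn [seq kmax mu K e | e <- take l r].
have SS : forall l, (l < size r)%N -> S l.+1 = (S l + kmax mu K (el l))%N.
  by move=> l hl; rewrite /S (take_nth e0 hl) map_rcons sumn_rcons.
have Q : forall l, (l <= j)%N -> forall n, lam i * (n.+1%:R - (S l.+1)%:R) <= D l n.
  elim=> [|l IH] hl.
    have hl' : (0 < size r)%N by lia.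
    have [a0 ea0] := actl 0%N hl.
    have [kp win] := window K0 hp ea0.
    rewrite SS //.
    apply: (queue_bound (act := fun t => el 0%N \in mu t) (A := Arr 0%N) (wj := hop_width r (w i) 0%N)) => //.
    - exact: (wk 0%N hl').
    - by move=> t; apply: mulr_ge0 => //; exact: ler0n.
    - by move=> t; apply: ler_wpM2l => //; rewrite ler_nat.
    - by move=> a; rewrite /S take0 /= subr0.
    - by move=> t; rewrite Dr actE.
  have hl' : (l.+1 < size r)%N by lia.
  have [a0 ea0] := actl l.+1 hl.
  have [kp win] := window K0 hp ea0.
  rewrite SS //.
  apply: (queue_bound (act := fun t => el l.+1 \in mu t) (A := Arr l.+1) (wj := hop_width r (w i) l.+1)) => //.
  - exact: (wk l.+1 hl').
  - by move=> t; have [] := mono l ltac:(lia) t.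
  - by move=> t; have [] := mono l ltac:(lia) t.
  - by move=> a; exact: (IH (ltnW hl)).
  - by move=> t; rewrite Dr actE.
have := Q j (leqnn j) s.
move=> hQ.
have hlt : lam i * (s.+1%:R - (S j.+1)%:R) < lam i * t0.+1%:R.
  by apply: le_lt_trans hQ _; apply: lt_le_trans sx1 ax2.
rewrite ltr_pM2l // in hlt.
have h : (s.+1%:R < (t0.+1 + S j.+1)%:R :> R) by rewrite natrD; lra.
rewrite ltr_nat in h.
rewrite /delay_deficit -/(S j.+1).
lia.
Qed.
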